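(* For every positive integer $m$, $\lim_{\theta\to0^+}L_{m+1}(\theta)\ge\lim_{\theta\to0^+}L_m(\theta)$.
   Context: $\lg$ denotes $\log_2$. For a positive integer $m$ and $0<\theta<1$, $$L_m(\theta)=\begin{cases}1+\lg m+\dfrac{\theta^{m/2}}{1-\theta^{m/2}}, & m=2^\beta \text{ for some integer } \beta\ge0,\\[2mm] 1+\lfloor\lg m\rfloor+\dfrac{\theta^{(2^{\lceil\lg m\rceil}-m)/2}}{1-\theta^{m/2}}, & \text{otherwise.}\end{cases}$$ *)

(* Defs.v *)
From HB Require Import structures.
From mathcomp Require Import all_boot all_order all_algebra.
From mathcomp Require Import all_classical all_reals all_analysis.
Set Implicit Arguments. Unset Strict Implicit. Unset Printing Implicit Defensive.
Import Order.TTheory GRing.Theory Num.Theory.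
Local Open Scope ring_scope.

Definition lg (R : realType) (x : R) : R := ln x / ln 2.

Definition L (R : realType) (m : nat) (theta : R) : R :=
  if `[< exists beta : nat, m = (2 ^ beta)%N >] then
    1 + lg (m%:R : R) + theta `^ (m%:R / 2) / (1 - theta `^ (m%:R / 2))
  else
    1 + (Num.floor (lg (m%:R : R)))%:~R
      + theta `^ (((2 : R) ^ Num.ceil (lg (m%:R : R)) - m%:R) / 2)
        / (1 - theta `^ (m%:R / 2)).

(* Main.v *)
Require Import Defs.
From HB Require Import structures.
From mathcomp Require Import all_boot all_order all_algebra.
From mathcomp Require Import all_classical all_reals all_analysis.
Import Order.TTheory GRing.Theory Num.Theory numFieldNormedType.Exports.
Local Open Scope classical_set_scope.
Local Open Scope ring_scope.


Lemma ln2_gt0 (R : realType) : 0 < ln (2:R).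
Proof. by apply: ln_gt0; rewrite ltr1n. Qed.

Lemma ln2X (R : realType) (k : nat) : ln ((2:R) ^+ k) = k%:R * ln 2.
Proof. by rewrite lnXn // mulr_natl. Qed.

Lemma lg_ge (R : realType) (x : R) (k : nat) : 0 < x -> (k%:R <= lg x) = (2 ^+ k <= x).
Proof.
move=> x0; rewrite /lg ler_pdivlMr ?ln2_gt0 // -ln2X ler_ln // posrE.
  by rewrite exprn_gt0.
Qed.

Lemma lg_lt (R : realType) (x : R) (k : nat) : 0 < x -> (lg x < k%:R) = (x < 2 ^+ k).
Proof.
move=> x0; rewrite /lg ltr_pdivrMr ?ln2_gt0 // -ln2X ltr_ln // posrE.
  by rewrite exprn_gt0.
Qed.

Lemma lim_aux (R : realType) (c a b : R) : 0 < a -> 0 < b ->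
  (fun x => c + x `^ a / (1 - x `^ b)) x @[x --> (0:R)^'+] --> c.
Proof.
move=> a0 b0.
suff : (fun x => c + x `^ a / (1 - x `^ b)) x @[x --> (0:R)^'+] --> c + 0 / (1 - 0).
  by rewrite mul0r addr0.
apply: cvgD; first exact: cvg_cst.
apply: cvgM; first exact: powR_cvg0.
apply: cvgV; first by rewrite subr0 oner_neq0.
apply: cvgB; first exact: cvg_cst.
exact: powR_cvg0.
Qed.

Lemma lg_gt (R : realType) (x : R) (k : nat) : 0 < x -> (k%:R < lg x) = (2 ^+ k < x).
Proof.
move=> x0; rewrite /lg ltr_pdivlMr ?ln2_gt0 // -ln2X ltr_ln // posrE.
  by rewrite exprn_gt0.
Qed.

Lemma PoszR (R : realType) (n : nat) : (Posz n)%:~R = n%:R :> R.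
Proof. by []. Qed.

Lemma limL (R : realType) (m : nat) : (0 < m)%N ->
  L m x @[x --> (0:R)^'+] --> (1 + (trunc_log 2 m)%:R : R).
Proof.
move=> m0; set n := trunc_log 2 m.
have h1 : (2 ^ n <= m)%N by apply: trunc_logP.
have h2 : (m < 2 ^ n.+1)%N by apply: trunc_log_ltn.
have mR : (0:R) < m%:R by rewrite ltr0n.
rewrite /L; case: asboolP => [[b mb]|np].
- have bn : b = n by rewrite /n mb trunc_expnK.
  have lgm : lg (m%:R : R) = n%:R.
    by rewrite mb bn natrX /lg ln2X mulfK // gt_eqF // ln2_gt0.
  rewrite lgm; apply: lim_aux; by rewrite divr_gt0 // ltr0n.
- have ltm : (2^n < m)%N.
    rewrite ltn_neqAle h1 andbT; apply/eqP => e; apply: np; by exists n.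
  rewrite (floor_def (m:=n)); last first.
    rewrite -PoszD !PoszR lg_ge // lg_lt // -!natrX ler_nat ltr_nat addn1.
    by rewrite h1.
  rewrite (ceil_def (m:=n.+1)); last first.
    rewrite [X in X%:~R < _](_ : _ = Posz n); last first.
      by rewrite -addn1 PoszD addrK.
    rewrite !PoszR lg_gt // -natrX ltr_nat ltm /=.
    by apply: ltW; rewrite lg_lt // -natrX ltr_nat.
  rewrite PoszR; apply: lim_aux; last by rewrite divr_gt0 // ltr0n.
  rewrite divr_gt0 // subr_gt0 (_ : (2:R) ^ (Posz n.+1) = 2 ^+ n.+1) //.
  by rewrite -natrX ltr_nat.
Qed.

Theorem lemma5 (R : realType) (m : nat) : (0 < m)%N ->
  exists l1 l2 : R,
    (L m.+1 x @[x --> (0:R)^'+] --> l1) /\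
    (L m x @[x --> (0:R)^'+] --> l2) /\
    l2 <= l1.
Proof.
move=> m0; exists (1 + (trunc_log 2 m.+1)%:R), (1 + (trunc_log 2 m)%:R).
split; first exact: limL.
split; first exact: limL.
by rewrite lerD2l ler_nat leq_trunc_log.
Qed.
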